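(* Let $\alpha\neq0$, let $m$ be a positive integer and $u\in\{0,1,\dots,m\}$. Then $$\Lambda'(u|\mu)\,\Lambda'(u-1|\mu)\cdots\Lambda'(u-m+1|\mu)=(-\alpha)^{-m}\,\Delta_-^{u}\,(\mu_2-\mu_1z)^m\,\Delta_-^{m-u}$$ as operators on $\mathbb{C}[\mu_1,\mu_2][z]$.
   Context: $\mu_1,\mu_2$ are commuting indeterminates, commuting with $z$ and with $\Delta_\pm$; $z$ acts by multiplication; $[\Delta_\pm f](z)=\tfrac12\big(f(z+\alpha)\pm f(z-\alpha)\big)$ (acting in the variable $z$). For $u\in\mathbb{C}$, $\Lambda'(u|\mu)=-\alpha^{-1}\big[(\mu_2-\mu_1z)\Delta_--\alpha u\,\mu_1\Delta_+\big]$. *)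

(* Defs.v *)
(* C := R[i] for R : realType (the complex numbers);
   C[mu1,mu2] := {poly {poly C}} with mu1 = 'X%:P (inner variable), mu2 = 'X (outer);
   C[mu1,mu2][z] := {poly {poly {poly C}}}, z = 'X. *)
From HB Require Import structures.
From mathcomp Require Import all_boot all_order all_algebra.
From mathcomp Require Import complex.
From mathcomp Require Import reals.
Set Implicit Arguments. Unset Strict Implicit. Unset Printing Implicit Defensive.
Import Order.TTheory GRing.Theory Num.Theory.
Local Open Scope ring_scope.

Section Ops.
Variable R : realType.
Local Notation C := (R[i]).
Definition coefR := {poly {poly C}}.
Definition polR := {poly coefR}.

Definition cst (c : C) : polR := c%:P%:P%:P.
Definition mu1 : polR := ('X : {poly C})%:P%:P.
Definition mu2 : polR := ('X : coefR)%:P.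
Definition zz : polR := 'X.

Definition shift (a : C) (f : polR) : polR := f \Po ('X + cst a).

Definition DeltaP (alpha : C) (f : polR) : polR :=
  cst (2^-1) * (shift alpha f + shift (- alpha) f).
Definition DeltaM (alpha : C) (f : polR) : polR :=
  cst (2^-1) * (shift alpha f - shift (- alpha) f).

Definition LambdaP (alpha u : C) (f : polR) : polR :=
  - cst (alpha^-1) *
    ((mu2 - mu1 * zz) * DeltaM alpha f - cst (alpha * u) * mu1 * DeltaP alpha f).

Definition LambdaProd (alpha : C) (u : int) (m : nat) (f : polR) : polR :=
  foldr (fun k g => LambdaP alpha ((u - k%:Z)%:~R) g) f (iota 0 m).

End Ops.

(* Main.v *)
Require Import Defs.
From HB Require Import structures.
From mathcomp Require Import all_boot all_order all_algebra.
From mathcomp Require Import complex.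
From mathcomp Require Import reals.
From mathcomp Require Import ring zify.
Import Order.TTheory GRing.Theory Num.Theory.
Local Open Scope ring_scope.

Section Proofs.
Variable R : realType.
Local Notation C := (R[i]).
Local Notation P := (polR R).
Variable alpha : C.
Local Notation DM := (DeltaM alpha).
Local Notation DP := (DeltaP alpha).
Local Notation A := (mu2 R - mu1 R * zz R).

Lemma cstD (a b : C) : cst (a + b) = cst a + cst b :> P.
Proof. by rewrite /cst !polyCD. Qed.
Lemma cstM (a b : C) : cst (a * b) = cst a * cst b :> P.
Proof. by rewrite /cst !polyCM. Qed.
Lemma cstN (a : C) : cst (- a) = - cst a :> P.
Proof. by rewrite /cst !polyCN. Qed.
Lemma cst0 : cst 0 = 0 :> P.
Proof. by rewrite /cst !polyC0. Qed.
Lemma cst1 : cst 1 = 1 :> P.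
Proof. by rewrite /cst !polyC1. Qed.

Definition zc (p : P) := exists q : coefR R, p = q%:P.

Lemma zc_cst c : zc (cst c). Proof. by exists (c%:P%:P). Qed.
Lemma zc_mu1 : zc (mu1 R). Proof. by exists (('X : {poly C})%:P). Qed.
Lemma zc_mu2 : zc (mu2 R). Proof. by exists 'X. Qed.
Lemma zcM p q : zc p -> zc q -> zc (p * q).
Proof. by move=> [a ->] [b ->]; exists (a * b); rewrite polyCM. Qed.
Lemma zcN p : zc p -> zc (- p).
Proof. by move=> [a ->]; exists (- a); rewrite polyCN. Qed.

Lemma shD a f g : shift a (f + g) = shift a f + shift a g :> P.
Proof. by rewrite /shift comp_polyD. Qed.
Lemma shB a f g : shift a (f - g) = shift a f - shift a g :> P.
Proof. by rewrite /shift comp_polyB. Qed.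
Lemma shN a g : shift a (- g) = - shift a g :> P.
Proof. by rewrite /shift -sub0r comp_polyB comp_poly0 sub0r. Qed.
Lemma shM a f g : shift a (f * g) = shift a f * shift a g :> P.
Proof. by rewrite /shift comp_polyM. Qed.
Lemma shzc a p : zc p -> shift a p = p.
Proof. by move=> [q ->]; rewrite /shift comp_polyC. Qed.
Lemma shX a : shift a (zz R) = zz R + cst a.
Proof. by rewrite /shift /zz comp_polyX. Qed.
Lemma shC a b f : shift a (shift b f) = shift b (shift a f) :> P.
Proof.
rewrite /shift -!comp_polyA; congr (f \Po _).
have E c d : ('X + cst c) \Po ('X + cst d) = 'X + cst d + cst c :> P.
  by rewrite comp_polyD comp_polyX /cst comp_polyC.
by rewrite !E addrAC.
Qed.

Section Gen.
Variable T : comRingType.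
Lemma gD (k x y z w : T) : k * (x + y - (z + w)) = k * (x - z) + k * (y - w).
Proof. ring. Qed.
Lemma gN (k x z : T) : k * (- x - - z) = - (k * (x - z)).
Proof. ring. Qed.
Lemma gZ (k p x z : T) : k * (p * x - p * z) = p * (k * (x - z)).
Proof. ring. Qed.
Lemma gZp (k p x z : T) : k * (p * x + p * z) = p * (k * (x + z)).
Proof. ring. Qed.
Lemma gP (k a b d : T) : k * (k * (a + b) - k * (b + d)) = k * (k * (a - b) + k * (b - d)).
Proof. ring. Qed.
Lemma gI0 (k a m1 m2 z hp hm : T) :
  k * ((m2 - m1 * (z + a)) * hp - (m2 - m1 * (z + - a)) * hm) =
  (m2 - m1 * z) * (k * (hp - hm)) - a * m1 * (k * (hp + hm)).
Proof. ring. Qed.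
End Gen.

Lemma DMD f g : DM (f + g) = DM f + DM g.
Proof. by rewrite /DeltaM !shD gD. Qed.
Lemma DMN f : DM (- f) = - DM f.
Proof. by rewrite /DeltaM !shN gN. Qed.
Lemma DMB f g : DM (f - g) = DM f - DM g.
Proof. by rewrite DMD DMN. Qed.
Lemma DMZ p f : zc p -> DM (p * f) = p * DM f.
Proof. by move=> zp; rewrite /DeltaM !shM !(shzc _ _ zp) gZ. Qed.
Lemma DPZ p f : zc p -> DP (p * f) = p * DP f.
Proof. by move=> zp; rewrite /DeltaP !shM !(shzc _ _ zp) gZp. Qed.
Lemma DMP f : DM (DP f) = DP (DM f).
Proof.
rewrite /DeltaM /DeltaP !shM !(shzc _ _ (zc_cst _)) !shD !shN.
by rewrite (shC alpha (- alpha)); apply: gP.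
Qed.

Lemma itD n f g : iter n DM (f + g) = iter n DM f + iter n DM g.
Proof. by elim: n => // n IH; rewrite !iterS IH DMD. Qed.
Lemma itN n f : iter n DM (- f) = - iter n DM f.
Proof. by elim: n => // n IH; rewrite !iterS IH DMN. Qed.
Lemma itB n f g : iter n DM (f - g) = iter n DM f - iter n DM g.
Proof. by rewrite itD itN. Qed.
Lemma itZ n p f : zc p -> iter n DM (p * f) = p * iter n DM f.
Proof. by move=> zp; elim: n => // n IH; rewrite !iterS IH DMZ. Qed.
Lemma itP n f : iter n DM (DP f) = DP (iter n DM f).
Proof. by elim: n => // n IH; rewrite !iterS IH DMP. Qed.

Lemma I0 h : DM (A * h) = A * DM h - cst alpha * mu1 R * DP h.
Proof.
rewrite /DeltaM /DeltaP !shM !shB !shM !(shzc _ _ zc_mu1) !(shzc _ _ zc_mu2) !shX cstN.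
exact: gI0.
Qed.

End Proofs.

Section Proofs2.
Variable R : realType.
Local Notation C := (R[i]).
Local Notation P := (polR R).
Variable alpha : C.
Local Notation DM := (DeltaM alpha).
Local Notation DP := (DeltaP alpha).
Local Notation A := (mu2 R - mu1 R * zz R).

Section Gen2.
Variable T : comRingType.
Lemma gI1 (a K m W Z : T) : Z - a * m * W - K * (m * W) = Z - (a + K) * m * W.
Proof. ring. Qed.
Lemma gL1 (c K m W Z : T) : - c * (Z - K * m * W - - K * (m * W)) = - c * Z.
Proof. ring. Qed.
Lemma gLZ (c p Am K m X Y : T) : - c * (Am * (p * X) - K * m * (p * Y)) = p * (- c * (Am * X - K * m * Y)).
Proof. ring. Qed.
Lemma gM1 (Am c Z : T) n : Am ^+ n * (- c * (Am * Z)) = - c * (Am ^+ n.+1 * Z).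
Proof. rewrite exprS; ring. Qed.
Lemma gM2 (Am c Z : T) n : - c * (Am * (Am ^+ n * Z)) = - c * (Am ^+ n.+1 * Z).
Proof. rewrite exprS; ring. Qed.
End Gen2.


Lemma I1 n h : iter n.+1 DM (A * h) =
  A * iter n.+1 DM h - cst (n.+1%:R * alpha) * mu1 R * DP (iter n DM h).
Proof.
elim: n h => [|n IH] h; first by rewrite (_ : 1%:R * alpha = alpha); [rewrite iterS I0 | rewrite mul1r].
rewrite iterS IH DMB I0 -[cst (n.+1%:R * alpha) * _ * _]mulrA DMZ; last exact: zc_cst.
rewrite DMZ; last exact: zc_mu1.
rewrite DMP -!iterS.
rewrite (_ : n.+2%:R * alpha = alpha + n.+1%:R * alpha); last first.
  by rewrite [n.+2%:R]mulrSr mulrDl mul1r addrC.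
rewrite cstD; exact: gI1.
Qed.

Lemma L2 n (x : C) h : x = n.+1%:R ->
  LambdaP alpha x (iter n DM h) = - cst alpha^-1 * iter n.+1 DM (A * h).
Proof. by move=> ->; rewrite I1 /LambdaP (mulrC alpha) -iterS. Qed.

Lemma L1 n (x : C) h : x = - n%:R ->
  iter n DM (LambdaP alpha x h) = - cst alpha^-1 * (A * iter n.+1 DM h).
Proof.
move=> ->; rewrite /LambdaP itZ; last exact/zcN/zc_cst.
rewrite itB -[cst (alpha * _) * _ * _]mulrA [iter n DM (cst _ * _)]itZ; last exact: zc_cst.
rewrite [iter n DM (mu1 R * _)]itZ; last exact: zc_mu1.
rewrite itP.
case: n => [|k].
  rewrite (_ : alpha * - 0%:R = 0); last by rewrite oppr0 mulr0.
  by rewrite cst0 (mul0r (mu1 R * _)) (subr0 (iter 0 DM _)).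
rewrite I1 -!iterSr (_ : alpha * - k.+1%:R = - (k.+1%:R * alpha)); last by rewrite mulrN mulrC.
rewrite cstN; exact: gL1.
Qed.

Lemma LZ x p g : zc R p -> LambdaP alpha x (p * g) = p * LambdaP alpha x g.
Proof. by move=> zp; rewrite /LambdaP DMZ // DPZ //; apply: gLZ. Qed.

Lemma coefS m : cst ((- alpha) ^- m) * - cst alpha^-1 = cst ((- alpha) ^- m.+1) :> P.
Proof. by rewrite -cstN -cstM exprSr invfM invrN. Qed.

Lemma gM3 (c1 c Am Z : P) n : c1 * (- c * (Am * (Am ^+ n * Z))) = (c1 * - c) * (Am ^+ n.+1 * Z).
Proof. by rewrite exprS !mulrA. Qed.
Lemma gM5 (c1 c W : P) : c1 * (- c * W) = (c1 * - c) * W.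
Proof. by rewrite mulrA. Qed.

Lemma foldr_ext (T U : Type) (F G : T -> U -> U) (x : U) s :
  (forall k y, F k y = G k y) -> foldr F x s = foldr G x s.
Proof. by move=> FG; elim: s => //= k s ->. Qed.

Lemma Main m : forall u, (u <= m)%N -> forall f,
  LambdaProd alpha u%:Z m f =
  cst ((- alpha) ^- m) * iter u DM (A ^+ m * iter (m - u) DM f).
Proof.
elim: m => [|m IH] u.
  by rewrite leqn0 => /eqP -> f; rewrite /LambdaProd /= expr0 invr1 cst1 !mul1r.
rewrite leq_eqVlt => /orP [/eqP -> f | um f].
  rewrite /LambdaProd /= -[1%N]addn0 iotaDl foldr_map.
  have -> : foldr (fun k g => LambdaP alpha ((m.+1%:Z - (1 + k)%N%:Z)%:~R) g) f (iota 0 m)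
      = LambdaProd alpha m%:Z m f.
    have E k : (m.+1%:Z - (1 + k)%N%:Z) = m%:Z - k%:Z by lia.
    by apply: foldr_ext => k g; rewrite E.
  rewrite IH // subnn LZ; last exact: zc_cst.
  rewrite (L2 m); last by rewrite subr0.
  by rewrite gM5 coefS subnn -iterS [A * (A ^+ m * _)]mulrA -exprS.
rewrite ltnS in um.
rewrite /LambdaProd.
have -> : iota 0 m.+1 = iota 0 m ++ [:: m] by rewrite -addn1 iotaD.
rewrite foldr_cat; cbn [foldr].
rewrite -/(LambdaProd alpha u%:Z m _) IH // (L1 (m - u)); last first.
  by rewrite -opprB subzn // intrN.
rewrite gM1 [iter u DM (- _ * _)]itZ; last exact/zcN/zc_cst.
by rewrite gM5 coefS subSn.
Qed.
End Proofs2.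

Theorem mainTheorem8 (R : realType) (alpha : R[i]) (m u : nat) :
  alpha != 0 -> (0 < m)%N -> (u <= m)%N ->
  forall f : polR R,
    LambdaProd alpha u%:Z m f =
    cst ((- alpha) ^- m) *
      iter u (DeltaM alpha) ((mu2 R - mu1 R * zz R) ^+ m * iter (m - u) (DeltaM alpha) f).
Proof. by move=> _ _ um f; apply: Main. Qed.
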